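(* For every integer $n\geq 4$, $$\dot{\imath}_{[1,2]}(P_4\Box P_n)=\begin{cases} n+1 & \text{if } n\in\{5,6,9\},\\ n & \text{otherwise.}\end{cases}$$
   Context: $P_k$ denotes the path on $k$ vertices and $P_m\Box P_n$ the Cartesian product of two paths (the $m\times n$ grid graph). A set $S$ of vertices of a graph $G$ is independent if no two vertices of $S$ are adjacent, and dominating if every vertex not in $S$ has at least one neighbor in $S$. An independent $[1,2]$-set of $G$ is an independent dominating set $S$ such that every vertex $v\in V(G)\setminus S$ has at least one and at most two neighbors in $S$. When $G$ has an independent $[1,2]$-set, $\dot{\imath}_{[1,2]}(G)$ denotes the minimum cardinality of an independent $[1,2]$-set of $G$ (the statement includes the existence of such a set). *)

(* Defs.v *)
From mathcomp Require Import all_boot.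
Set Implicit Arguments. Unset Strict Implicit. Unset Printing Implicit Defensive.

Definition grid_vertex (m n : nat) : finType := ('I_m * 'I_n)%type.

Definition nat_adj (a b : nat) : bool := (a.+1 == b) || (b.+1 == a).

Definition grid_adj (m n : nat) (u v : grid_vertex m n) : bool :=
  ((u.1 == v.1) && nat_adj u.2 v.2) || ((u.2 == v.2) && nat_adj u.1 v.1).

Definition independent (m n : nat) (S : {set grid_vertex m n}) : bool :=
  [forall u in S, forall v in S, ~~ grid_adj u v].

Definition indep_12_set (m n : nat) (S : {set grid_vertex m n}) : bool :=
  independent S &&
  [forall v in ~: S, (1 <= #|[set u in S | grid_adj v u]| <= 2)].

Definition i12_grid_eq (m n k : nat) : Prop :=
  (exists S : {set grid_vertex m n}, indep_12_set S && (#|S| == k)) /\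
  (forall S : {set grid_vertex m n}, indep_12_set S -> k <= #|S|).

(* Main.v *)
Require Import Defs.
From mathcomp Require Import all_boot zify.
Set Implicit Arguments. Unset Strict Implicit. Unset Printing Implicit Defensive.

Definition col := (bool * bool * bool * bool)%type.
Definition Z : col := (false,false,false,false).
Definition get (c : col) (i : nat) : bool :=
  match i with 0 => c.1.1.1 | 1 => c.1.1.2 | 2 => c.1.2 | 3 => c.2 | _ => false end.
Definition cw (c : col) : nat := get c 0 + get c 1 + get c 2 + get c 3.
Definition up (b : col) i := if i is i'.+1 then get b i' else false.
Definition dom_row (a b c : col) i := get b i ||
  (1 <= get c i + get a i + get b i.+1 + up b i <= 2).
Definition ok3 (a b c : col) : bool :=
  [&& all (fun i => ~~ (get b i && get b i.+1)) (iota 0 4),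
      all (fun i => ~~ (get a i && get b i)) (iota 0 4) &
      all (dom_row a b c) (iota 0 4)].
Definition bs := [:: false; true].
Definition all_cols : seq col := [seq (p, x4) | p <- [seq (q, x3) | q <- [seq (x1, x2) | x1 <- bs, x2 <- bs], x3 <- bs], x4 <- bs].
Definition all_states : seq (col * col) := [seq (a,b) | a <- all_cols, b <- all_cols].
Lemma mem_cols c : c \in all_cols.
Proof. by case: c => [[[[] []] []] []]. Qed.
Lemma mem_states s : s \in all_states.
Proof. by case: s => a b; apply/allpairsP; exists (a,b); rewrite !mem_cols. Qed.

Definition omin (x y : option nat) : option nat :=
  match x, y with Some a, Some b => Some (minn a b) | Some a, None => Some a | None, y => y end.
Definition cand (f : col * col -> option nat) (a b c : col) : option nat :=
  if ok3 a b c then omap (addn (cw c)) (f (a,b)) else None.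
Definition step (f : col * col -> option nat) (s : col * col) : option nat :=
  foldr (fun a acc => omin (cand f a s.1 s.2) acc) None all_cols.
Definition code (c : col) : nat := get c 0 * 8 + get c 1 * 4 + get c 2 * 2 + get c 3.
Definition idx (s : col * col) : nat := code s.1 * 16 + code s.2.
Definition memo (f : col * col -> option nat) : col * col -> option nat :=
  let tbl := map f all_states in fun s => nth None tbl (idx s).
Lemma idxchk : all (fun s => (nth s all_states (idx s) == s) && (idx s < size all_states)) all_states.
Proof. vm_compute. reflexivity. Qed.
Definition M1 (s : col * col) : option nat := if s.1 == Z then Some (cw s.2) else None.
Fixpoint D k := match k with 0 => M1 | k'.+1 => memo (step (D k')) end.
Definition target n := if n \in [:: 5; 6; 9] then n.+1 else n.

Definition fin_ok (k : nat) (f : col * col -> option nat) s :=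
  ~~ ok3 s.1 s.2 Z || (match f s with Some v => target k.+1 <= v | None => true end).
Lemma lowchk : all (fun k => let f := D k in all (fin_ok k f) all_states) (iota 3 9).
Proof. vm_compute. reflexivity. Qed.
Lemma upchk : all (fun k => let f := D k in
   has (fun s => ok3 s.1 s.2 Z && (f s == Some (target k.+1))) all_states) (iota 3 9).
Proof. vm_compute. reflexivity. Qed.
Lemma perchk : let f := D 11 in let g := D 12 in
   all (fun s => g s == omap (addn 1) (f s)) all_states.
Proof. vm_compute. reflexivity. Qed.

Lemma memoE f s : memo f s = f s.
Proof.
rewrite /memo.
have /allP /(_ s (mem_states s)) /andP [/eqP E lt] := idxchk.
by rewrite (nth_map s) // E.
Qed.

Lemma DS k s : D k.+1 s = step (D k) s.
Proof. by rewrite /= memoE. Qed.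

Lemma fold_le (g : col -> option nat) (l : seq col) a v : a \in l -> g a = Some v ->
  exists w, foldr (fun a acc => omin (g a) acc) None l = Some w /\ w <= v.
Proof.
move=> al ga; elim: l al => [|x l IH] //; rewrite inE => /orP [/eqP <-|al] /=.
  rewrite ga; case: (foldr _ _ _) => [w|] /=; last by exists v.
  by exists (minn v w); rewrite geq_minl.
have [w [-> le]] := IH al.
case: (g x) => [u|] /=; last by exists w.
by exists (minn u w); split=> //; rewrite geq_min le orbT.
Qed.

Lemma fold_some (g : col -> option nat) (l : seq col) w :
  foldr (fun a acc => omin (g a) acc) None l = Some w -> exists a, g a = Some w.
Proof.
elim: l w => [|x l IH] w //=.
case E: (g x) => [u|] /=; last by apply: IH.
case F: (foldr _ _ _) => [u'|] //= [<-]; last by exists x.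
by case: (leqP u u') => h; [exists x | apply: IH].
Qed.

Lemma step_le f a b c v : ok3 a b c -> f (a,b) = Some v ->
  exists w, step f (b,c) = Some w /\ w <= cw c + v.
Proof.
move=> ok fv; apply: (fold_le (g := fun a => cand f a b c)) (mem_cols a) _.
by rewrite /cand ok fv.
Qed.

Lemma step_some f b c w : step f (b,c) = Some w ->
  exists a v, [/\ ok3 a b c, f (a,b) = Some v & w = cw c + v].
Proof.
move=> h; have [a] := fold_some (g := fun a => cand f a b c) h; rewrite /cand.
case O: (ok3 a b c) => //.
by case E: (f (a,b)) => [v|] //= [<-]; exists a, v.
Qed.

Lemma eq_step f g s : f =1 g -> step f s = step g s.
Proof.
move=> fg; rewrite /step; elim: all_cols => //= x l ->.
by rewrite /cand fg.
Qed.

Lemma step_shift f d s : step (fun s => omap (addn d) (f s)) s = omap (addn d) (step f s).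
Proof.
rewrite /step; elim: all_cols => //= x l ->; rewrite /cand.
case: (ok3 _ _ _); case: (f (x, s.1)) => [u|] //=;
  case: (foldr _ _ _) => [u'|] //=; by rewrite addnCA ?addn_minr.
Qed.

Lemma Dper_gen m d s : (forall s, D m.+1 s = omap (addn 1) (D m s)) ->
  D (m + d) s = omap (addn d) (D m s).
Proof.
move=> per; elim: d s => [|d IH] s; first by rewrite addn0; case: (D m s).
rewrite addnS DS (eq_step _ IH) step_shift -DS per.
by case: (D m s) => //= v; rewrite addnA addn1.
Qed.

Lemma Dper d s : D (11 + d) s = omap (addn d) (D 11 s).
Proof.
apply: Dper_gen => s'.
by have /allP /(_ s' (mem_states s')) /eqP := perchk.
Qed.

Definition Lg (g : nat -> col) j := if j is j'.+1 then g j' else Z.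
Definition pv (g : nat -> col) k := forall j, j.+1 < k -> ok3 (Lg g j) (g j) (g j.+1).
Definition W (g : nat -> col) k := \sum_(j < k) cw (g j).

Lemma dp_lower k g : pv g k.+1 -> exists v, D k (Lg g k, g k) = Some v /\ v <= W g k.+1.
Proof.
elim: k => [|k IH] pg.
  by exists (cw (g 0)); rewrite /W big_ord_recr big_ord0.
have [|v [Dv le]] := IH; first by move=> j jk; apply: pg; apply: ltnW.
have [w [sw lw]] := step_le (pg k (ltnSn _)) Dv.
exists w; rewrite DS sw; split=> //.
rewrite /W big_ord_recr /= addnC; apply: leq_trans lw _.
by rewrite leq_add2l.
Qed.

Lemma dp_upper k s v : D k s = Some v -> exists g,
  [/\ pv g k.+1, (Lg g k, g k) = s, W g k.+1 = v & forall j, k < j -> g j = Z].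
Proof.
elim: k s v => [|k IH] [b c] v.
  rewrite /= /M1 /=; case: eqP => // -> [<-].
  exists (fun j => if j == 0 then c else Z); split => //.
  all: try by rewrite /W big_ord_recr big_ord0.
  all: try by case.
rewrite DS => /step_some [a [u [ok Du ->]]].
have [g [pg sg Wg zg]] := IH _ _ Du.
case: sg => ga gb.
have La : forall m, m <= k ->
  (if m is j'.+1 then (if j' == k.+1 then c else g j') else Z) = Lg g m.
  by case=> // m mk; rewrite /Lg ltn_eqF // ltnW.
exists (fun j => if j == k.+1 then c else g j); split.
- move=> j; rewrite ltnS leq_eqVlt => /orP [/eqP [->]|jk].
    by rewrite eqxx (ltn_eqF (ltnSn k)) /Lg La // ga gb.
  rewrite (ltn_eqF (ltnW jk)) (ltn_eqF jk) /Lg La; last exact: ltnW.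
  exact: pg.
- by rewrite /Lg eqxx (ltn_eqF (ltnSn k)) gb.
- rewrite /W big_ord_recr /= eqxx addnC; congr addn.
  by rewrite -Wg; apply: eq_bigr => j _; rewrite (ltn_eqF (ltn_ord j)).
- move=> j kj; rewrite (gtn_eqF kj); apply: zg; exact: ltnW.
Qed.

Lemma pw (b : bool) x1 x2 y1 y2 : (b && (((y1 == x1) && nat_adj y2 x2) || ((y2 == x2) && nat_adj y1 x1)) : nat) = ((x1 == y1) && (x2 == y2.+1) && b) + (if y2 is j.+1 then (x1 == y1) && (x2 == j) && b else false) + ((x1 == y1.+1) && (x2 == y2) && b) + (if y1 is i.+1 then (x1 == i) && (x2 == y2) && b else false).
Proof.
rewrite /nat_adj; case: b; rewrite ?andbF ?andbT; case: y1 => [|y1]; case: y2 => [|y2]; lia.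
Qed.

Definition P n (S : {set grid_vertex 4 n}) (i j : nat) : bool :=
  [exists u in S, (u.1 == i :> nat) && (u.2 == j :> nat)].
Definition colS n (S : {set grid_vertex 4 n}) j : col := (P S 0 j, P S 1 j, P S 2 j, P S 3 j).

Lemma PE n (S : {set grid_vertex 4 n}) i j :
  reflect (exists2 u, u \in S & (u.1 = i :> nat) /\ (u.2 = j :> nat)) (P S i j).
Proof.
apply: (iffP existsP) => [[u /andP [uS /andP [/eqP e1 /eqP e2]]]|[u uS [e1 e2]]].
  by exists u.
by exists u; rewrite uS e1 e2 !eqxx.
Qed.

Lemma P_out n (S : {set grid_vertex 4 n}) i j : (3 < i) || (n <= j) -> P S i j = false.
Proof.
move=> h; apply/PE => [[u _ [e1 e2]]].
have := ltn_ord u.1; have := ltn_ord u.2; lia.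
Qed.

Lemma get_colS n (S : {set grid_vertex 4 n}) i j : get (colS S j) i = P S i j.
Proof. by case: i => [|[|[|[|i]]]] //; rewrite P_out. Qed.

Lemma PS n (S : {set grid_vertex 4 n}) (u : grid_vertex 4 n) : P S u.1 u.2 = (u \in S).
Proof.
apply/PE/idP => [[w wS [e1 e2]]|uS]; last by exists u.
suff -> : u = w by [].
by case: u w e1 e2 {wS} => [u1 u2] [w1 w2] /= e1 e2; rewrite (ord_inj e1) (ord_inj e2).
Qed.

Lemma sumP n (S : {set grid_vertex 4 n}) a b :
  \sum_(u : grid_vertex 4 n) ((u.1 == a :> nat) && (u.2 == b :> nat) && (u \in S) : nat) = P S a b.
Proof.
case: (PE S a b) => [[w wS [e1 e2]]|nP].
  rewrite (bigD1 w) //= e1 e2 !eqxx wS /= big1 // => u uw.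
  apply/eqP; rewrite eqb0; apply/negP => /andP [/andP [/eqP f1 /eqP f2] _].
  move/eqP: uw; apply.
  case: u w e1 e2 f1 f2 {wS} => [u1 u2] [w1 w2] /= e1 e2 f1 f2.
  by rewrite -e1 in f1; rewrite -e2 in f2; rewrite (ord_inj f1) (ord_inj f2).
rewrite big1 // => u _; apply/eqP; rewrite eqb0; apply/negP => /andP [/andP [/eqP f1 /eqP f2] uS].
by apply: nP; exists u.
Qed.

Definition Pl n (S : {set grid_vertex 4 n}) i j := if j is j'.+1 then P S i j' else false.
Definition Pu n (S : {set grid_vertex 4 n}) i j := if i is i'.+1 then P S i' j else false.

Lemma card_nb n (S : {set grid_vertex 4 n}) (v : grid_vertex 4 n) :
  #|[set u in S | grid_adj v u]| =
  P S v.1 v.2.+1 + Pl S v.1 v.2 + P S v.1.+1 v.2 + Pu S v.1 v.2.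
Proof.
rewrite -sum1_card big_mkcond /=.
rewrite (eq_bigr (fun u : grid_vertex 4 n => ((u.1 == v.1 :> nat) && (u.2 == v.2.+1 :> nat) && (u \in S) : nat)
  + (if (v.2 : nat) is j.+1 then (u.1 == v.1 :> nat) && (u.2 == j :> nat) && (u \in S) else false)
  + ((u.1 == v.1.+1 :> nat) && (u.2 == v.2 :> nat) && (u \in S) : nat)
  + (if (v.1 : nat) is i.+1 then (u.1 == i :> nat) && (u.2 == v.2 :> nat) && (u \in S) else false))); last first.
  move=> u _; rewrite inE -pw.
  by case: (_ && _).
rewrite !big_split /= !sumP /Pl /Pu.
congr (_ + _ + _ + _).
  case: (nat_of_ord v.2) => [|j]; first by rewrite big1.
  exact: sumP.
case: (nat_of_ord v.1) => [|i]; first by rewrite big1.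
exact: sumP.
Qed.

Lemma oE k (x y : 'I_k) : (x == y) = (x == y :> nat).
Proof. by []. Qed.

Lemma get_Z i : get Z i = false.
Proof. by case: i => [|[|[|[|i]]]]. Qed.

Lemma get_Lc n (S : {set grid_vertex 4 n}) i j : get (Lg (colS S) j) i = Pl S i j.
Proof. by case: j => [|j] /=; [rewrite get_Z | rewrite get_colS]. Qed.

Lemma get_up n (S : {set grid_vertex 4 n}) i j :
  up (colS S j) i = Pu S i j.
Proof. by case: i => [|i] //=; rewrite get_colS. Qed.

Lemma ok_ver a b c i : ok3 a b c -> i < 4 -> ~~ (get b i && get b i.+1).
Proof. by case/and3P => /allP h _ _ i4; apply: h; rewrite mem_iota. Qed.
Lemma ok_hor a b c i : ok3 a b c -> i < 4 -> ~~ (get a i && get b i).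
Proof. by case/and3P => _ /allP h _ i4; apply: h; rewrite mem_iota. Qed.
Lemma ok_dom a b c i : ok3 a b c -> i < 4 -> dom_row a b c i.
Proof. by case/and3P => _ _ /allP h i4; apply: h; rewrite mem_iota. Qed.

Lemma card_cols n (S : {set grid_vertex 4 n}) : #|S| = W (colS S) n.
Proof.
rewrite -sum1_card big_mkcond /=.
rewrite (eq_bigr (fun u : grid_vertex 4 n => (P S u.1 u.2 : nat))); last first.
  by move=> u _; rewrite PS; case: (u \in S).
rewrite -(pair_big xpredT xpredT (fun (i : 'I_4) (j : 'I_n) => (P S i j : nat))) /=.
rewrite exchange_big /W; apply: eq_bigr => j _.
by rewrite !big_ord_recl big_ord0 /cw !get_colS /= addn0 !addnA.
Qed.

Lemma ok_of_indep n (S : {set grid_vertex 4 n}) : indep_12_set S ->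
  forall j, j < n -> ok3 (Lg (colS S) j) (colS S j) (colS S j.+1).
Proof.
move=> /andP [ind dm] j jn.
have NA : forall u w, u \in S -> w \in S -> ~~ grid_adj u w.
  by move=> u w uS wS; move/forallP: ind => /(_ u); rewrite uS => /forallP /(_ w); rewrite wS.
apply/and3P; split; apply/allP => i; rewrite mem_iota add0n => /andP [_ i4].
- rewrite !get_colS; apply/negP => /andP [/PE [u uS [u1 u2]] /PE [w wS [w1 w2]]].
  by have := NA u w uS wS; rewrite /grid_adj /nat_adj !oE u1 u2 w1 w2 !eqxx /= orbT.
- rewrite get_Lc get_colS; case: j jn => [|j] jn //=.
  apply/negP => /andP [/PE [u uS [u1 u2]] /PE [w wS [w1 w2]]].
  by have := NA u w uS wS; rewrite /grid_adj /nat_adj !oE u1 u2 w1 w2 !eqxx.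
- rewrite /dom_row !get_colS get_Lc get_up; case Pij: (P S i j) => //=.
  pose v : grid_vertex 4 n := (Ordinal i4, Ordinal jn).
  have vS : v \notin S by rewrite -PS Pij.
  by move/forallP: dm => /(_ v); rewrite inE vS /= card_nb.
Qed.

Lemma indep_of_ok n (S : {set grid_vertex 4 n}) :
  (forall j, j < n -> ok3 (Lg (colS S) j) (colS S j) (colS S j.+1)) -> indep_12_set S.
Proof.
move=> H; apply/andP; split.
  apply/forallP => u; apply/implyP => uS; apply/forallP => w; apply/implyP => wS.
  rewrite /grid_adj /nat_adj !oE.
  apply/negP => /orP [/andP [/eqP e1 /orP [/eqP h|/eqP h]] | /andP [/eqP e2 /orP [/eqP h|/eqP h]]].
  - have := ok_hor (H _ (ltn_ord w.2)) (ltn_ord u.1).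
    by rewrite get_Lc get_colS -h /= (PS S u) uS e1 h (PS S w) wS.
  - have := ok_hor (H _ (ltn_ord u.2)) (ltn_ord w.1).
    by rewrite get_Lc get_colS -h /= (PS S w) wS -e1 h (PS S u) uS.
  - have := ok_ver (H _ (ltn_ord u.2)) (ltn_ord u.1).
    by rewrite !get_colS (PS S u) uS h e2 (PS S w) wS.
  - have := ok_ver (H _ (ltn_ord w.2)) (ltn_ord w.1).
    by rewrite !get_colS (PS S w) wS h -e2 (PS S u) uS.
apply/forallP => v; apply/implyP; rewrite inE => vS.
have := ok_dom (H _ (ltn_ord v.2)) (ltn_ord v.1).
by rewrite /dom_row !get_colS get_Lc get_up (PS S v) (negbTE vS) /= card_nb.
Qed.

Lemma target_big k : 11 <= k -> target k.+1 = k.+1.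
Proof. by move=> hk; rewrite /target; case: ifP => //; rewrite !inE => /or3P [] /eqP; lia. Qed.

Lemma lower_comp k s v : 3 <= k -> ok3 s.1 s.2 Z -> D k s = Some v -> target k.+1 <= v.
Proof.
have L : forall k, k \in iota 3 9 -> forall s, ok3 s.1 s.2 Z ->
    match D k s with Some v => target k.+1 <= v | None => true end.
  move=> k' hk s' ok'.
  have h := allP lowchk k' hk.
  have := allP (h : all (fin_ok k' (D k')) all_states) s' (mem_states s').
  by rewrite /fin_ok ok'.
move=> k3 ok Dv; case: (leqP k 11) => hk.
  have := L k _ s ok; rewrite Dv; apply; rewrite mem_iota; lia.
have [d ed] : exists d, k = 11 + d by exists (k - 11); lia.
rewrite ed Dper in Dv.
have := L 11 _ s ok; rewrite mem_iota => /(_ isT).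
case: (D 11 s) Dv => [v'|] //= [<-].
rewrite !target_big; lia.
Qed.

Lemma upper_comp k : 3 <= k -> exists s, ok3 s.1 s.2 Z /\ D k s = Some (target k.+1).
Proof.
have U : forall k, k \in iota 3 9 -> exists s, ok3 s.1 s.2 Z /\ D k s = Some (target k.+1).
  move=> k' hk.
  have h := allP upchk k' hk.
  have /hasP [s _ /andP [ok /eqP E]] :=
    (h : has (fun s => ok3 s.1 s.2 Z && (D k' s == Some (target k'.+1))) all_states).
  by exists s.
move=> k3; case: (leqP k 11) => hk.
  by apply: U; rewrite mem_iota; lia.
have [s [ok E]] := U 11 isT.
exists s; split => //.
have [d ->] : exists d, k = 11 + d by exists (k - 11); lia.
rewrite Dper E /= !target_big; [congr Some; lia | lia | lia].
Qed.

Lemma get_big c i : 3 < i -> get c i = false.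
Proof. by case: i => [|[|[|[|i]]]]. Qed.

Lemma colS_of n (g : nat -> col) j : (forall j, n <= j -> g j = Z) ->
  colS [set u : grid_vertex 4 n | get (g u.2) u.1] j = g j.
Proof.
move=> zg.
have PP : forall i, P [set u : grid_vertex 4 n | get (g u.2) u.1] i j = get (g j) i.
  move=> i; case: (ltnP i 4) => i4; last by rewrite P_out ?get_big //; apply/orP; left.
  case: (ltnP j n) => jn; last by rewrite P_out ?zg ?get_Z //; apply/orP; right.
  apply/PE/idP => [[u] | h]; first by rewrite inE => h [<- <-].
  by exists (Ordinal i4, Ordinal jn); rewrite ?inE.
by rewrite /colS !PP; case: (g j) => [[[]]].
Qed.

Unset Implicit Arguments.
Theorem mainTheorem5 (n : nat) (hn : 4 <= n) :
  i12_grid_eq 4 n (if n \in [:: 5; 6; 9] then n.+1 else n).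
Proof.
case: n hn => [|k] // hn.
have k3 : 3 <= k by [].
change (i12_grid_eq 4 k.+1 (target k.+1)).
split.
  have [s [ok Ds]] := upper_comp k3.
  have [g [pg sg Wg zg]] := dp_upper Ds.
  have zg' : forall j, k.+1 <= j -> g j = Z by move=> j; apply: zg.
  pose S := [set u : grid_vertex 4 k.+1 | get (g u.2) u.1].
  have cS : forall j, colS S j = g j by move=> j; apply: colS_of.
  exists S; apply/andP; split.
    apply: indep_of_ok => j jn.
    have -> : Lg (colS S) j = Lg g j by case: j {jn} => //= j; rewrite cS.
    rewrite !cS; case: (ltnP j.+1 k.+1) => h; first exact: pg.
    have ej : j = k by lia.
    by rewrite ej (zg k.+1 (ltnSn _)); move: ok; rewrite -sg.
  by rewrite card_cols -Wg; apply/eqP; apply: eq_bigr => j _; rewrite cS.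
move=> S ind.
have H := ok_of_indep ind.
have pg : pv (colS S) k.+1 by move=> j jn; apply: H; lia.
have [v [Dv le]] := dp_lower pg.
have ok : ok3 (Lg (colS S) k) (colS S k) Z.
  have -> : Z = colS S k.+1 by rewrite /colS !P_out // ?leqnn orbT.
  exact: H.
by rewrite card_cols; apply: leq_trans le; apply: lower_comp Dv.
Qed.
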